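(* Let $p,r$ be positive integers, $s=p+2r$, and write elements of $\mathbb{R}^{(p+s)\times p}$ as $X=(X_0;X_1;X_2;X_3)$ with blocks of $p,p,r,r$ rows; set $Z=X_0+iX_1$, $W=X_2+iX_3$. Let $\hat M\in\mathfrak{so}(p+r,\mathbb{C})$ and define $\hat\Phi^*:\mathbb{R}^{(p+s)\times p}\to\mathbb{C}^{(p+r)\times p}$ by $\hat\Phi^*(X)=\binom{Z}{W}+\hat M\binom{\bar Z}{\bar W}$. Then the complex valued components of $\hat\Phi^*$ constitute an orthogonal harmonic family on $\mathbb{R}^{(p+s)\times p}$ equipped with the Euclidean metric.
   Context: $\mathfrak{so}(p+r,\mathbb{C})$ is the set of complex skew-symmetric $(p+r)\times(p+r)$ matrices. The Euclidean metric is $\langle X,Y\rangle=\mathrm{trace}(X^tY)$. For a Riemannian manifold $(M,g)$ and complex functions $\phi,\psi$, $\tau(\phi)$ is the Laplace–Beltrami operator (extended complex-linearly) and $\kappa(\phi,\psi)=g(\mathrm{grad}\,\phi,\mathrm{grad}\,\psi)$ with $g$ extended complex-bilinearly. A set $\Omega$ of complex functions is an orthogonal harmonic family if $\tau(\phi)=0$ and $\kappa(\phi,\psi)=0$ for all $\phi,\psi\in\Omega$. *)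

(* Defs.v *)
From mathcomp Require Import all_boot all_order all_algebra.
From mathcomp Require Import all_classical all_reals all_analysis.
From mathcomp Require Export complex.
Import GRing.Theory Num.Theory.
Local Open Scope ring_scope.
Local Open Scope complex_scope.

Set Implicit Arguments.
Unset Strict Implicit.
Unset Printing Implicit Defensive.

(* Coordinates on R^{m x n} = 'M[R]_(m,n) are the entries x_{ij}; the Euclidean
   metric <X,Y> = trace(X^t Y) makes them orthonormal, with coordinate vector
   fields the directions delta_mx i j. *)

Definition pderivC (R : realType) (m n : nat) (f : 'M[R]_(m, n) -> R[i])
  (i : 'I_m) (j : 'I_n) : 'M[R]_(m, n) -> R[i] :=
  fun x => ('D_(delta_mx i j) (fun y => complex.Re (f y)) x)
           +i* ('D_(delta_mx i j) (fun y => complex.Im (f y)) x).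

(* tension field / Laplace-Beltrami operator for the Euclidean metric,
   extended complex-linearly *)
Definition tau (R : realType) (m n : nat) (f : 'M[R]_(m, n) -> R[i])
  : 'M[R]_(m, n) -> R[i] :=
  fun x => \sum_(i < m) \sum_(j < n) pderivC (pderivC f i j) i j x.

(* conformality operator kappa(phi,psi) = g(grad phi, grad psi) for the
   Euclidean metric, extended complex-bilinearly *)
Definition kappa (R : realType) (m n : nat) (f g : 'M[R]_(m, n) -> R[i])
  : 'M[R]_(m, n) -> R[i] :=
  fun x => \sum_(i < m) \sum_(j < n) (pderivC f i j x * pderivC g i j x).

Definition orthogonal_harmonic_family (R : realType) (m n : nat)
  (Omega : set ('M[R]_(m, n) -> R[i])) : Prop :=
  forall phi psi, Omega phi -> Omega psi ->
    (forall x, tau phi x = 0) /\ (forall x, kappa phi psi x = 0).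

Definition cmx (R : realType) (m n : nat) (A : 'M[R]_(m, n)) : 'M[R[i]]_(m, n) :=
  map_mx (fun a : R => a%:C) A.

(* X = (X0; X1; X2; X3) with blocks of p, p, r, r rows (total p + s, s = p + 2r) *)
Definition blk0 (R : realType) (p r : nat) (X : 'M[R]_(p + p + r + r, p)) : 'M[R]_(p, p) :=
  usubmx (usubmx (usubmx X)).
Definition blk1 (R : realType) (p r : nat) (X : 'M[R]_(p + p + r + r, p)) : 'M[R]_(p, p) :=
  dsubmx (usubmx (usubmx X)).
Definition blk2 (R : realType) (p r : nat) (X : 'M[R]_(p + p + r + r, p)) : 'M[R]_(r, p) :=
  dsubmx (usubmx X).
Definition blk3 (R : realType) (p r : nat) (X : 'M[R]_(p + p + r + r, p)) : 'M[R]_(r, p) :=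
  dsubmx X.

Definition Zof (R : realType) (p r : nat) (X : 'M[R]_(p + p + r + r, p)) : 'M[R[i]]_(p, p) :=
  cmx (blk0 X) + 'i *: cmx (blk1 X).
Definition Wof (R : realType) (p r : nat) (X : 'M[R]_(p + p + r + r, p)) : 'M[R[i]]_(r, p) :=
  cmx (blk2 X) + 'i *: cmx (blk3 X).

Definition PhiHat (R : realType) (p r : nat) (M : 'M[R[i]]_(p + r))
  (X : 'M[R]_(p + p + r + r, p)) : 'M[R[i]]_(p + r, p) :=
  col_mx (Zof X) (Wof X) + M *m map_mx (fun z => z^*) (col_mx (Zof X) (Wof X)).

(* Main.v *)
Require Import Defs.
From mathcomp Require Import all_boot all_order all_algebra.
From mathcomp Require Import all_classical all_reals all_analysis.
From mathcomp Require Import complex.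
From mathcomp Require Import ring zify.
Import GRing.Theory Num.Theory.
Local Open Scope ring_scope.
Local Open Scope classical_set_scope.
Local Open Scope complex_scope.

Section Idx.
Variables p r : nat.
Definition ia (m : 'I_(p + r)) : 'I_(p + p + r + r) :=
  match fintype.split m with
  | inl k => lshift r (lshift r (lshift p k))
  | inr k => lshift r (rshift (p + p) k) end.
Definition ib (m : 'I_(p + r)) : 'I_(p + p + r + r) :=
  match fintype.split m with
  | inl k => lshift r (lshift r (rshift p k))
  | inr k => rshift (p + p + r) k end.

Lemma ia_val m : val (ia m) = if (m < p)%N then val m else (p + m)%N.
Proof.
by rewrite /ia; case: split_ordP => k -> /=; rewrite ?addnA.
Qed.
Lemma ib_val m : val (ib m) = if (m < p)%N then (p + m)%N else (r + p + m)%N.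
Proof.
rewrite /ib; case: split_ordP => k -> /= //; lia.
Qed.

Lemma eq_aa m m' : (ia m == ia m') = (m == m').
Proof.
rewrite -val_eqE -[m == m']val_eqE /= !ia_val.
have := ltn_ord m; have := ltn_ord m'; have : \val m = nat_of_ord m by []; have : \val m' = nat_of_ord m' by [].
by case: (ltnP m p); case: (ltnP m' p) => *; apply/eqP/eqP; lia.
Qed.
Lemma eq_bb m m' : (ib m == ib m') = (m == m').
Proof.
rewrite -val_eqE -[m == m']val_eqE /= !ib_val.
have := ltn_ord m; have := ltn_ord m'; have : \val m = nat_of_ord m by []; have : \val m' = nat_of_ord m' by [].
by case: (ltnP m p); case: (ltnP m' p) => *; apply/eqP/eqP; lia.
Qed.
Lemma eq_ba m m' : (ib m == ia m') = false.
Proof.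
rewrite -val_eqE /= ib_val ia_val.
have := ltn_ord m; have := ltn_ord m'; have : \val m = nat_of_ord m by []; have : \val m' = nat_of_ord m' by [].
by case: (ltnP m p); case: (ltnP m' p) => *; apply/eqP; lia.
Qed.

Lemma ia_l k : ia (lshift r k) = lshift r (lshift r (lshift p k)).
Proof. by apply: val_inj; rewrite ia_val /= ltn_ord. Qed.
Lemma ib_l k : ib (lshift r k) = lshift r (lshift r (rshift p k)).
Proof. by apply: val_inj; rewrite ib_val /= ltn_ord. Qed.
Lemma ia_r k : ia (rshift p k) = lshift r (rshift (p + p) k).
Proof. by apply: val_inj; rewrite ia_val /= ltnNge leq_addr /= addnA. Qed.
Lemma ib_r k : ib (rshift p k) = rshift (p + p + r) k.
Proof. apply: val_inj; rewrite ib_val /= ltnNge leq_addr /=; lia. Qed.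

Lemma sum_reidx (V : nmodType) (F : 'I_(p + p + r + r) -> V) :
  \sum_i F i = \sum_(m < p + r) (F (ia m) + F (ib m)).
Proof.
rewrite big_split /= [LHS]big_split_ord [in LHS]big_split_ord [in LHS]big_split_ord /=.
rewrite [\sum_(m < p + r) F (ia m)]big_split_ord [\sum_(m < p + r) F (ib m)]big_split_ord /=.
under [\sum_(i < p) F (ia _)]eq_bigr do rewrite ia_l.
under [\sum_(i < r) F (ia _)]eq_bigr do rewrite ia_r.
under [\sum_(i < p) F (ib _)]eq_bigr do rewrite ib_l.
under [\sum_(i < r) F (ib _)]eq_bigr do rewrite ib_r.
by rewrite -addrA addrACA.
Qed.
End Idx.
Arguments ia {p r}.
Arguments ib {p r}.

Section Aux.
Variable R : realType.

Lemma Dlin (V : normedModType R) (f : V -> R) (v : V) (a : R) :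
  (forall x h, f (h *: v + x) = f x + h * a) -> forall x, 'D_v f x = a.
Proof.
move=> H x; rewrite /derive.
apply: cvg_lim => //; apply: cvg_near_cst.
near=> h; rewrite /= H addrAC subrr add0r -[_ *: _]/(h^-1 * (h * a)) mulKf //.
near: h; exact: (@nbhs_dnbhs_neq R^o 0).
Unshelve. all: by end_near.
Qed.

Lemma pderivC_lin m n (f : 'M[R]_(m, n) -> R[i]) :
  (forall x y (h : R), f (h *: y + x) = h%:C * f y + f x) ->
  forall i j x, pderivC f i j x = f (delta_mx i j).
Proof.
move=> H i j x; rewrite /pderivC.
rewrite (@Dlin _ (fun y => complex.Re (f y)) _ (complex.Re (f (delta_mx i j)))); last first.
  by move=> y h; rewrite H; case: (f (delta_mx i j)) => a b; case: (f y) => c d /=; rewrite !mul0r subr0 addrC.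
rewrite (@Dlin _ (fun y => complex.Im (f y)) _ (complex.Im (f (delta_mx i j)))); last first.
  by move=> y h; rewrite H; case: (f (delta_mx i j)) => a b; case: (f y) => c d /=; rewrite !mul0r addr0 addrC.
by case: (f _).
Qed.

Lemma pderivC_cst m n (c : R[i]) i j x :
  pderivC (fun _ : 'M[R]_(m, n) => c) i j x = 0.
Proof.
rewrite /pderivC (@Dlin _ _ _ 0) ?(@Dlin _ _ _ 0) //.
  by move=> *; rewrite mulr0 addr0.
by move=> *; rewrite mulr0 addr0.
Qed.


Lemma eD (T : nmodType) m n (A B : 'M[T]_(m,n)) i j : (A + B) i j = A i j + B i j.
Proof. by rewrite mxE. Qed.
Lemma eZ (T : pzRingType) m n (a : T) (A : 'M[T]_(m,n)) i j : (a *: A) i j = a * A i j.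
Proof. by rewrite mxE. Qed.
Lemma eU (T : Type) m1 m2 n (A : 'M[T]_(m1 + m2,n)) i j : usubmx A i j = A (lshift _ i) j.
Proof. by rewrite mxE. Qed.
Lemma eDs (T : Type) m1 m2 n (A : 'M[T]_(m1 + m2,n)) i j : dsubmx A i j = A (rshift _ i) j.
Proof. by rewrite mxE. Qed.
Lemma eC m n (A : 'M[R]_(m,n)) i j : cmx A i j = (A i j)%:C.
Proof. by rewrite mxE. Qed.
Lemma eMul (T : pzRingType) m n q (A : 'M[T]_(m,n)) (B : 'M[T]_(n,q)) i j :
  (A *m B) i j = \sum_k A i k * B k j.
Proof. by rewrite mxE. Qed.
Lemma eMap (T U : Type) m n (f : T -> U) (A : 'M[T]_(m,n)) i j : map_mx f A i j = f (A i j).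
Proof. by rewrite mxE. Qed.
Lemma eDelta m n (i0 : 'I_m) (j0 : 'I_n) i j :
  (delta_mx i0 j0 : 'M[R]_(m,n)) i j = ((i == i0) && (j == j0))%:R.
Proof. by rewrite mxE. Qed.

Variables p r : nat.
Definition uE (X : 'M[R]_(p + p + r + r, p)) (m : 'I_(p + r)) (l : 'I_p) :=
  (X (ia m) l)%:C + 'i * (X (ib m) l)%:C.
Definition phiE (M : 'M[R[i]]_(p + r)) X (k : 'I_(p + r)) (l : 'I_p) :=
  uE X k l + \sum_m M k m * conjc (uE X m l).

Lemma UE X m l : col_mx (Zof X) (Wof X) m l = uE X m l.
Proof.
rewrite /uE; case: (split_ordP m) => k ->; [rewrite col_mxEu ia_l ib_l | rewrite col_mxEd ia_r ib_r].
  by rewrite /Zof eD eZ !eC /blk0 /blk1 !eU !eDs ?eU.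
by rewrite /Wof eD eZ !eC /blk2 /blk3 !eDs ?eU.
Qed.

Lemma PhiE M X k l : PhiHat M X k l = phiE M X k l.
Proof.
rewrite /PhiHat eD UE eMul /phiE; congr (_ + _).
by apply: eq_bigr => m _; rewrite eMap UE.
Qed.

Lemma phiLin M k l X Y (h : R) :
  phiE M (h *: Y + X) k l = h%:C * phiE M Y k l + phiE M X k l.
Proof.
rewrite /phiE /uE.
under eq_bigr do rewrite !eD !eZ.
rewrite !eD !eZ mulrDr mulr_sumr addrACA -big_split /=.
congr (_ + _); first by rewrite !rmorphD !rmorphM /=; ring.
apply: eq_bigr => m _; rewrite mulrCA -mulrDr; congr (_ * _).
apply/eqP; rewrite eq_complex /=; apply/andP; split; apply/eqP; ring.
Qed.

Lemma cR (x : R) : conjc (x%:C) = x%:C.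
Proof. by apply/eqP; rewrite eq_complex /= oppr0 !eqxx. Qed.
Lemma ciR (x : R) : conjc ('i * x%:C) = - ('i * x%:C).
Proof. apply/eqP; rewrite eq_complex /=; apply/andP; split; apply/eqP; ring. Qed.

Lemma uE_a m j x l : uE (delta_mx (ia m) j) x l = (((x == m) && (l == j))%:R : R)%:C.
Proof. by rewrite /uE !eDelta eq_aa eq_ba /= mulr0n rmorph0 mulr0 addr0. Qed.
Lemma uE_b m j x l : uE (delta_mx (ib m) j) x l = 'i * (((x == m) && (l == j))%:R : R)%:C.
Proof. by rewrite /uE !eDelta eq_bb [ia x == _]eq_sym eq_ba /= mulr0n rmorph0 add0r. Qed.

Lemma phi_a M m j k l : phiE M (delta_mx (ia m) j) k l =
  (((l == j)%:R : R)%:C) * ((((k == m)%:R : R)%:C) + M k m).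
Proof.
rewrite /phiE uE_a; under eq_bigr do rewrite uE_a cR.
rewrite (bigD1 m) //= eqxx big1 ?addr0 => [|m' /negbTE -> /=]; last first.
  by rewrite mulr0n rmorph0 mulr0.
by case: (l == j); case: (k == m); rewrite /= ?rmorph_nat; ring.
Qed.
Lemma phi_b M m j k l : phiE M (delta_mx (ib m) j) k l =
  (((l == j)%:R : R)%:C) * ('i * ((((k == m)%:R : R)%:C) - M k m)).
Proof.
rewrite /phiE uE_b; under eq_bigr do rewrite uE_b ciR.
rewrite (bigD1 m) //= eqxx big1 ?addr0 => [|m' /negbTE -> /=]; last first.
  by rewrite mulr0n rmorph0 mulr0 oppr0 mulr0.
by case: (l == j); case: (k == m); rewrite /= ?rmorph_nat; ring.
Qed.
End Aux.
Arguments phiE {R p r}.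
Arguments uE {R p r}.

Lemma keyid (R : realType) (c d x y u v : R[i]) :
  (c*(x+u))*(d*(y+v)) + (c*('i*(x-u)))*(d*('i*(y-v))) = c*d*(2*(x*v + u*y)).
Proof.
have ii : 'i * 'i = -1 :> R[i].
  by apply/eqP; rewrite eq_complex /=; apply/andP; split; apply/eqP; ring.
have -> : (c*('i*(x-u)))*(d*('i*(y-v))) = ('i * 'i) * ((c*(x-u))*(d*(y-v))) by ring.
rewrite ii; ring.
Qed.

Lemma sumdl (R : realType) n (f : 'I_n -> R[i]) k :
  \sum_m ((((k == m)%:R : R)%:C) * f m) = f k.
Proof.
rewrite (bigD1 k) //= eqxx /= rmorph_nat mulr1n mul1r big1 ?addr0 // => m.
by rewrite eq_sym => /negbTE -> /=; rewrite mulr0n rmorph0 mul0r.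
Qed.
Lemma sumdr (R : realType) n (f : 'I_n -> R[i]) k :
  \sum_m (f m * (((k == m)%:R : R)%:C)) = f k.
Proof. by under eq_bigr do rewrite mulrC; apply: sumdl. Qed.

Lemma eT (T : Type) m n (A : 'M[T]_(m,n)) i j : A^T i j = A j i.
Proof. by rewrite mxE. Qed.
Lemma eN (T : zmodType) m n (A : 'M[T]_(m,n)) i j : (- A) i j = - A i j.
Proof. by rewrite mxE. Qed.

Theorem proposition9p1 (R : realType) (p r : nat) (hp : (0 < p)%N) (hr : (0 < r)%N)
  (M : 'M[R[i]]_(p + r)) (hM : M^T = - M) :
  orthogonal_harmonic_family
    (range (fun kl : 'I_(p + r) * 'I_p =>
              fun X : 'M[R]_(p + p + r + r, p) => PhiHat M X kl.1 kl.2)).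
Proof.
move=> phi psi [[k l] _ <-] [[k' l'] _ <-] /=.
have E : forall k l, (fun X => PhiHat M X k l) = (fun X => phiE M X k l).
  by move=> ? ?; apply: funext => X; exact: PhiE.
rewrite !E.
have D : forall k l i j x, pderivC (fun X => phiE M X k l) i j x = phiE M (delta_mx i j) k l.
  by move=> *; apply: pderivC_lin => x y h; exact: phiLin.
split.
  move=> x; rewrite /tau; apply: big1 => i _; apply: big1 => j _.
  have -> : pderivC (fun X => phiE M X k l) i j = fun _ => phiE M (delta_mx i j) k l.
    by apply: funext => y; exact: D.
  exact: pderivC_cst.
move=> x; rewrite /kappa.
under eq_bigr do under eq_bigr do rewrite !D.
rewrite sum_reidx.
transitivity (\sum_(m < p + r) \sum_(j < p) ((((l == j)%:R : R)%:C) * (((l' == j)%:R : R)%:C) *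
   (2 * ((((k == m)%:R : R)%:C) * M k' m + M k m * (((k' == m)%:R : R)%:C))))).
  apply: eq_bigr => m _; rewrite -big_split /=; apply: eq_bigr => j _.
  by rewrite !phi_a !phi_b keyid.
rewrite exchange_big /=; apply: big1 => j _.
rewrite -mulr_sumr -mulr_sumr big_split /= sumdl sumdr.
have sk : M k' k = - M k k'.
  by move/matrixP: hM => /(_ k k'); rewrite eT eN.
by rewrite sk addNr mulr0 mulr0.
Qed.
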